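(* Let $\mathcal{S}$ be an addable abstract numeration system, let $\mathbf{x}$ be an $\mathcal{S}$-automatic infinite word over a finite alphabet, and let $X$ be the subshift generated by $\mathbf{x}$. Then the winning shift $W(X)$ is weakly $\mathcal{S}$-codable.
   Context: Subshifts are one-sided: closed shift-invariant subsets of $A^{\mathbb{N}}$; the subshift generated by $\mathbf{x}$ is its orbit closure. Winning shift: for $X\subseteq A^{\mathbb{N}}$ and a choice sequence $\alpha=\alpha_0\alpha_1\cdots\in\{0,\dots,|A|-1\}^{\mathbb{N}}$, Alice and Bob play infinitely many rounds; in round $j$ Alice chooses $A_j\subseteq A$ with $|A_j|=\alpha_j+1$ and Bob chooses $a_j\in A_j$; Alice wins if $a_0a_1\cdots\in X$. $W(X)$ is the set of $\alpha$ for which Alice has a winning strategy (a subset of $\mathbb{N}^{\mathbb{N}}$). ANS: $\mathcal{S}=(L,\prec)$ with $L$ an infinite language and $\prec$ a total order on $L$ of order type $\omega$; $\mathrm{rep}(n)$ is the $n$-th word of $L$, $\mathrm{val}=\mathrm{rep}^{-1}$; tuples in $\mathbb{N}^d$ are represented by left-padding the component representations with a new symbol $\#$ to equal length. $Y\subseteq\mathbb{N}^d$ is $\mathcal{S}$-recognizable if $\mathrm{rep}(Y)$ is regular. $\mathcal{S}$ is addable if $\{(x,y,x+y)\}$ is $\mathcal{S}$-recognizable. $\mathbf{x}$ is $\mathcal{S}$-automatic if some DFA with output outputs $\mathbf{x}[n]$ on input $\mathrm{rep}(n)$ for all $n\ge0$. Codability: for $\mathbf{y}\in\mathbb{N}^{\mathbb{N}}$,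 $\sum\mathbf{y}=\sum_iy_i$; if $\sum\mathbf{y}=d<\infty$, $\nu(\mathbf{y})$ is the unique nondecreasing $(n_1,\dots,n_d)$ with $y_j=|\{k:n_k=j\}|$ for all $j$. $Y\subseteq\mathbb{N}^{\mathbb{N}}$ is weakly $\mathcal{S}$-codable if for each $k\in\mathbb{N}$ the set $\{\nu(\mathbf{y}):\mathbf{y}\in Y,\sum\mathbf{y}\le k\}$ is $\mathcal{S}$-recognizable (i.e. its intersection with each $\mathbb{N}^i$, $i\le k$, is). *)

(* Defs.v *)
From mathcomp Require Import all_boot.
Set Implicit Arguments. Unset Strict Implicit. Unset Printing Implicit Defensive.

Record DFA (B : finType) := {
  dfa_state : finType;
  dfa_start : dfa_state;
  dfa_delta : dfa_state -> B -> dfa_state;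
  dfa_final : pred dfa_state }.

Definition dfa_accepts (B : finType) (D : DFA B) (w : seq B) : bool :=
  @dfa_final B D (foldl (@dfa_delta B D) (@dfa_start B D) w).

Definition regular (B : finType) (L : seq B -> Prop) : Prop :=
  exists D : DFA B, forall w, L w <-> dfa_accepts D w.

(* An ANS (L, ≺) over the finite alphabet Sigma, with ≺ of order type ω, is
   given by its enumeration rep : nat -> seq Sigma (rep n = n-th word of L),
   which is injective; L is the range of rep, and u ≺ v iff
   val u < val v. *)
Record ANS (Sigma : finType) := {
  rep : nat -> seq Sigma;
  rep_inj : injective rep }.

Definition ANS_lang (Sigma : finType) (S : ANS Sigma) (w : seq Sigma) : Prop :=
  exists n, rep S n = w.

Definition ANS_lt (Sigma : finType) (S : ANS Sigma) (u v : seq Sigma) : Prop :=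
  exists m n, rep S m = u /\ rep S n = v /\ m < n.

(* Padding symbol # is [None]; letters of L are [Some a]. A d-tuple is
   represented by a word over the alphabet (Sigma ∪ {#})^d. *)
Definition pad_letter (Sigma : finType) (d : nat) := {ffun 'I_d -> option Sigma}.

Definition rep_tuple (Sigma : finType) (S : ANS Sigma) (d : nat)
    (t : d.-tuple nat) : seq (pad_letter Sigma d) :=
  let m := \max_(i < d) size (rep S (tnth t i)) in
  let padded (i : 'I_d) : seq (option Sigma) :=
      nseq (m - size (rep S (tnth t i))) None ++ map Some (rep S (tnth t i)) in
  mkseq (fun p => [ffun i => nth None (padded i) p]) m.

Definition recognizable (Sigma : finType) (S : ANS Sigma) (d : nat)
    (Y : d.-tuple nat -> Prop) : Prop :=
  regular (fun w : seq (pad_letter Sigma d) =>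
             exists t, Y t /\ rep_tuple S t = w).

Definition addable (Sigma : finType) (S : ANS Sigma) : Prop :=
  recognizable S (fun t : 3.-tuple nat =>
     tnth t (@Ordinal 3 2 isT) = tnth t (@Ordinal 3 0 isT) + tnth t (@Ordinal 3 1 isT)).

Definition automatic (Sigma A : finType) (S : ANS Sigma) (x : nat -> A) : Prop :=
  exists (Q : finType) (q0 : Q) (delta : Q -> Sigma -> Q) (out : Q -> A),
    forall n, x n = out (foldl delta q0 (rep S n)).

(* Orbit closure of x in A^N (product topology): y lies in it iff every
   prefix of y occurs in x, i.e. every cylinder around y meets the orbit. *)
Definition orbit_closure (A : finType) (x : nat -> A) (y : nat -> A) : Prop :=
  forall k, exists n, forall i, i < k -> y i = x (n + i).

(* A strategy for Alice: given Bob's previous choices, a set A_j ⊆ A. *)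
Definition strategy (A : finType) := seq A -> {set A}.

Definition prefix_of (A : Type) (a : nat -> A) (j : nat) : seq A := mkseq a j.

Definition winning_strategy (A : finType) (X : (nat -> A) -> Prop)
    (alpha : nat -> nat) (s : strategy A) : Prop :=
  (forall h : seq A, #|s h| = (alpha (size h)).+1) /\
  (forall a : nat -> A, (forall j, a j \in s (prefix_of a j)) -> X a).

Definition winning_shift (A : finType) (X : (nat -> A) -> Prop)
    (alpha : nat -> nat) : Prop :=
  exists s : strategy A, winning_strategy X alpha s.

Definition sum_eq (y : nat -> nat) (i : nat) : Prop :=
  exists N, (forall j, N <= j -> y j = 0) /\ \sum_(j < N) y j = i.

Definition nu_is (y : nat -> nat) (d : nat) (t : d.-tuple nat) : Prop :=
  sorted leq t /\ forall j, y j = count (pred1 j) t.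

Definition weakly_codable (Sigma : finType) (S : ANS Sigma)
    (Y : (nat -> nat) -> Prop) : Prop :=
  forall k i, i <= k ->
    recognizable S (fun t : i.-tuple nat =>
      exists y, Y y /\ (exists s, sum_eq y s /\ s <= k) /\ nu_is y t).

(* Main.v *)
Require Import Defs.
From mathcomp Require Import all_boot boolp zify.
Set Implicit Arguments. Unset Strict Implicit. Unset Printing Implicit Defensive.

Fixpoint strip (T : eqType) (c : T) (w : seq T) : seq T :=
  if w is a :: w' then (if a == c then strip c w' else w) else [::].

Definition nohead (T : eqType) (c : T) (w : seq T) : bool :=
  if w is a :: _ then a != c else true.

Lemma strip_nohead (T : eqType) (c : T) w : nohead c (strip c w).
Proof. elim: w => [|a w IH] //=; case: ifP => H //; by rewrite /= H. Qed.

Lemma strip_id (T : eqType) (c : T) w : nohead c w -> strip c w = w.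
Proof. case: w => [|a w] //= /negbTE ->. by []. Qed.

Lemma strip_nseq (T : eqType) (c : T) k w : strip c (nseq k c ++ w) = strip c w.
Proof. elim: k => [|k IH] //=; by rewrite eqxx. Qed.

Lemma strip_decomp (T : eqType) (c : T) w : exists k, w = nseq k c ++ strip c w.
Proof.
elim: w => [|a w [k IH]] /=; first by exists 0.
case: eqP => [->|_]; first by exists k.+1; rewrite /= -IH.
by exists 0.
Qed.

Lemma foldl_map' (T1 T2 R : Type) (h : T1 -> T2) (f : R -> T2 -> R) z s :
  foldl f z (map h s) = foldl (fun r a => f r (h a)) z s.
Proof. by elim: s z => //= a s IH z. Qed.

Section Lang.
Variable B : finType.

Lemma regular_ext (L L' : seq B -> Prop) :
  (forall w, L w <-> L' w) -> regular L -> regular L'.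
Proof. move=> H [D HD]; exists D => w; rewrite -H; exact: HD. Qed.

Definition mkD (Q : finType) (q0 : Q) (d : Q -> B -> Q) (f : pred Q) : DFA B :=
  {| dfa_state := Q; dfa_start := q0; dfa_delta := d; dfa_final := f |}.

Lemma regular_const (P : Prop) : regular (fun _ : seq B => P).
Proof.
case: (pselect P) => HP.
  by exists (@mkD unit tt (fun _ _ => tt) (fun _ => true)).
by exists (@mkD unit tt (fun _ _ => tt) (fun _ => false)).
Qed.

Lemma regular_compl (L : seq B -> Prop) : regular L -> regular (fun w => ~ L w).
Proof.
move=> [D HD]; exists (@mkD _ (dfa_start D) (@dfa_delta _ D) (predC (@dfa_final _ D))).
move=> w; rewrite HD /dfa_accepts /=; split; first by move/negP.
by move/negP.
Qed.

Lemma foldl_pair (Q1 Q2 : Type) (d1 : Q1 -> B -> Q1) (d2 : Q2 -> B -> Q2) q1 q2 w :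
  foldl (fun p a => (d1 p.1 a, d2 p.2 a)) (q1, q2) w = (foldl d1 q1 w, foldl d2 q2 w).
Proof. by elim: w q1 q2 => [|a w IH] q1 q2 //=; rewrite IH. Qed.

Lemma regular_and (L1 L2 : seq B -> Prop) :
  regular L1 -> regular L2 -> regular (fun w => L1 w /\ L2 w).
Proof.
move=> [D1 H1] [D2 H2].
exists (@mkD (prod (dfa_state D1) (dfa_state D2)) (dfa_start D1, dfa_start D2)
  (fun p a => (@dfa_delta _ D1 p.1 a, @dfa_delta _ D2 p.2 a))
  (fun p => @dfa_final _ D1 p.1 && @dfa_final _ D2 p.2)).
move=> w; rewrite H1 H2 /dfa_accepts /= foldl_pair /=.
by split; [case=> -> ->|case/andP].
Qed.

Lemma regular_or (L1 L2 : seq B -> Prop) :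
  regular L1 -> regular L2 -> regular (fun w => L1 w \/ L2 w).
Proof.
move=> [D1 H1] [D2 H2].
exists (@mkD (prod (dfa_state D1) (dfa_state D2)) (dfa_start D1, dfa_start D2)
  (fun p a => (@dfa_delta _ D1 p.1 a, @dfa_delta _ D2 p.2 a))
  (fun p => @dfa_final _ D1 p.1 || @dfa_final _ D2 p.2)).
move=> w; rewrite H1 H2 /dfa_accepts /= foldl_pair /=.
by split; [case=> ->; rewrite ?orbT|case/orP; [left|right]].
Qed.

Lemma regular_preim (C : finType) (h : B -> C) (L : seq C -> Prop) :
  regular L -> regular (fun w => L (map h w)).
Proof.
move=> [D HD]; exists (@mkD _ (dfa_start D) (fun q b => @dfa_delta _ D q (h b)) (@dfa_final _ D)).
by move=> w; rewrite HD /dfa_accepts /= foldl_map'.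
Qed.

Lemma regular_strip_preim (c : B) (L : seq B -> Prop) :
  regular L -> regular (fun w => L (strip c w)).
Proof.
move=> [D HD].
pose d (p : bool * dfa_state D) a :=
  if ~~ p.1 && (a == c) then p else (true, @dfa_delta _ D p.2 a).
have Ht : forall q w, foldl d (true, q) w = (true, foldl (@dfa_delta _ D) q w).
  by move=> q w; elim: w q => [|a w IH] q //=; exact: IH.
have Hf : forall q w, (foldl d (false, q) w).2 = foldl (@dfa_delta _ D) q (strip c w).
  move=> q w; elim: w => [|a w IH] //=.
  rewrite /d /=; case: eqP => //= _; by rewrite Ht.
exists (@mkD _ (false, dfa_start D) d (fun p => @dfa_final _ D p.2)).
by move=> w; rewrite HD /dfa_accepts /= Hf.
Qed.

Lemma regular_nohead (c : B) : regular (fun w => nohead c w).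
Proof.
exists (@mkD (option bool) None
  (fun p a => if p is Some b then Some b else Some (a != c))
  (fun p => if p is Some b then b else true)).
move=> w; rewrite /dfa_accepts /=.
have H : forall b w, foldl (fun p a => if p is Some b then Some b else Some (a != c)) (Some b) w = Some b.
  by move=> b w'; elim: w' => //.
by case: w => [|a w] //=; rewrite H.
Qed.

Lemma regular_all_seq (I : eqType) (s : seq I) (L : I -> seq B -> Prop) :
  (forall i, regular (L i)) -> regular (fun w => forall i, i \in s -> L i w).
Proof.
move=> H; elim: s => [|i s IH].
  by apply: (regular_ext _ (regular_const True)) => w; split.
apply: (regular_ext _ (regular_and (H i) IH)) => w; split.
  by case=> Hi Hs j; rewrite inE; case/orP => [/eqP ->|]; auto.
by move=> Hj; split; [apply: Hj; rewrite inE eqxx|move=> j Hjs; apply: Hj; rewrite inE Hjs orbT].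
Qed.

Lemma regular_all (I : finType) (L : I -> seq B -> Prop) :
  (forall i, regular (L i)) -> regular (fun w => forall i, L i w).
Proof.
move=> H; apply: (regular_ext _ (regular_all_seq (enum I) H)) => w; split => Hw i //.
by apply: Hw; rewrite mem_enum.
Qed.

Definition reach (C : finType) (Q : finType) (step : Q -> C -> {set Q}) (S0 : {set Q}) (u : seq C) :=
  foldl (fun (S : {set Q}) a => \bigcup_(q in S) step q a) S0 u.

End Lang.

Lemma regular_nfa (C : finType) (Q : finType) (step : Q -> C -> {set Q}) (S0 : {set Q}) (fin : pred Q) :
  regular (fun u : seq C => exists2 q, q \in reach step S0 u & fin q).
Proof.
exists (@mkD C {set Q} S0 (fun (S : {set Q}) a => \bigcup_(q in S) step q a) (fun S : {set Q} => [exists q in S, fin q])).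
move=> u; rewrite /dfa_accepts /= /reach.
by split; [case=> q Hq Hf; apply/existsP; exists q; rewrite Hq|case/existsP => q /andP[]; exists q].
Qed.

Lemma regular_image_from (B C : finType) (h : B -> C) (D : DFA B) (S0 : {set dfa_state D}) :
  regular (fun u => exists q, q \in S0 /\ exists w, map h w = u /\
                  @dfa_final _ D (foldl (@dfa_delta _ D) q w)).
Proof.
pose step (q : dfa_state D) (c : C) := [set q' | [exists b, (h b == c) && (@dfa_delta _ D q b == q')]].
have HR : forall u S q', q' \in reach step S u <->
    exists q, q \in S /\ exists w, map h w = u /\ foldl (@dfa_delta _ D) q w = q'.
  elim=> [|c u IH] S q' /=.
    split; first by move=> H; exists q'; split => //; exists [::].
    by case=> q [Hq [[|b w] [//= _ <-]]].
  rewrite /reach /= -/(reach step _ u) IH; split.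
    case=> q1 [/bigcupP[q Hq]]; rewrite inE => /existsP[b /andP[/eqP Hb /eqP Hq1]] [w [Hw Hf]].
    by exists q; split => //; exists (b :: w); rewrite /= Hb Hw Hq1.
  case=> q [Hq [[|b w] [Hm Hf]]]; first by [].
  case: Hm => Hb Hw.
  exists (@dfa_delta _ D q b); split; last by exists w.
  by apply/bigcupP; exists q => //; rewrite inE; apply/existsP; exists b; rewrite Hb !eqxx.
apply: (regular_ext _ (regular_nfa step S0 (@dfa_final _ D))) => u; split.
  by case=> q' /HR [q [Hq [w [Hw Hf]]]] Hfin; exists q; split => //; exists w; rewrite Hf.
case=> q [Hq [w [Hw Hf]]]; exists (foldl (@dfa_delta _ D) q w) => //.
by apply/HR; exists q; split => //; exists w.
Qed.

Lemma regular_image (B C : finType) (h : B -> C) (L : seq B -> Prop) :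
  regular L -> regular (fun u => exists w, L w /\ map h w = u).
Proof.
move=> [D HD]; apply: (regular_ext _ (regular_image_from h [set dfa_start D])) => u; split.
  case=> q [/set1P -> [w [Hw Hf]]]; exists w; split => //; exact/HD.
case=> w [/HD Hw Hu]; exists (dfa_start D); split; first exact: set11.
by exists w.
Qed.

Lemma regular_strip_image (B : finType) (c : B) (L : seq B -> Prop) :
  regular L -> regular (fun u => exists w, L w /\ strip c w = u).
Proof.
move=> [D HD].
pose R := [set q | `[< exists k, foldl (@dfa_delta _ D) (dfa_start D) (nseq k c) = q >]].
have H := regular_and (regular_nohead c) (regular_image_from id R).
apply: (regular_ext _ H) => u; split.
  case=> [[Hn [q [/[!inE] /asboolP [k Hk] [w [Hw Hf]]]]]].
  exists (nseq k c ++ u); split.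
    by apply/HD; rewrite /dfa_accepts foldl_cat Hk -Hw map_id.
  by rewrite strip_nseq strip_id.
case=> w [Hw <-]; split; first exact: strip_nohead.
have [k Hk] := strip_decomp c w.
exists (foldl (@dfa_delta _ D) (dfa_start D) (nseq k c)); split.
  by rewrite inE; apply/asboolP; exists k.
exists (strip c w); split; first by rewrite map_id.
by rewrite -foldl_cat -Hk; apply/HD.
Qed.

Section Enc.
Variables (Sigma : finType) (S : ANS Sigma).

Definition msz d (v : 'I_d -> nat) := \max_(i < d) size (rep S (v i)).
Definition padw (m : nat) (r : seq Sigma) : seq (option Sigma) :=
  nseq (m - size r) None ++ map Some r.
Definition enc d (v : 'I_d -> nat) : seq (pad_letter Sigma d) :=
  mkseq (fun p => [ffun i => nth None (padw (msz v) (rep S (v i))) p]) (msz v).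

Lemma rep_tupleE d (t : d.-tuple nat) : rep_tuple S t = enc (tnth t).
Proof. by []. Qed.

Definition c0 d : pad_letter Sigma d := [ffun _ => None].
Definition proj d e (h : 'I_d -> 'I_e) (c : pad_letter Sigma e) : pad_letter Sigma d :=
  [ffun j => c (h j)].

Lemma size_enc d (v : 'I_d -> nat) : size (enc v) = msz v.
Proof. by rewrite size_mkseq. Qed.

Lemma msz_ge d (v : 'I_d -> nat) i : size (rep S (v i)) <= msz v.
Proof. exact: (leq_bigmax (F := fun i => size (rep S (v i)))). Qed.

Lemma msz_comp d e (h : 'I_d -> 'I_e) (v : 'I_e -> nat) : msz (fun j => v (h j)) <= msz v.
Proof. by apply/bigmax_leqP => i _; apply: msz_ge. Qed.

Lemma padw_shift M m r : size r <= m -> m <= M ->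
  padw M r = nseq (M - m) None ++ padw m r.
Proof.
move=> H1 H2; rewrite /padw catA -nseqD; congr (nseq _ _ ++ _).
by rewrite addnBA // subnK.
Qed.

Lemma enc_map d e (h : 'I_d -> 'I_e) (v : 'I_e -> nat) :
  map (proj h) (enc v) = nseq (msz v - msz (fun j => v (h j))) (c0 d) ++ enc (fun j => v (h j)).
Proof.
have Hle := msz_comp h v.
apply: (@eq_from_nth _ (c0 d)).
  by rewrite size_map size_cat size_nseq !size_enc subnK.
move=> p; rewrite size_map size_enc => Hp.
rewrite (nth_map (c0 e)) ?size_enc // nth_mkseq // nth_cat size_nseq.
apply/ffunP => j; rewrite !ffunE.
rewrite (@padw_shift (msz v) (msz (fun j => v (h j)))) //; last first.
  exact: (msz_ge (fun j => v (h j)) j).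
rewrite nth_cat size_nseq; case: ifP => Hp2.
  by rewrite !nth_nseq Hp2 /c0 ffunE.
rewrite /enc nth_mkseq ?ffunE //.
move/negbT: Hp2; rewrite -leqNgt => Hp2; rewrite ltn_subLR // subnK //.
Qed.

Lemma enc_nohead d (v : 'I_d -> nat) : nohead (c0 d) (enc v).
Proof.
rewrite /enc; case Hm: (msz v) => [|m] //=.
have Hd : 0 < #|'I_d|.
  rewrite card_ord; case: d v Hm => // v; by rewrite /msz big_ord0.
have [i0 Hi0] := eq_bigmax (fun i => size (rep S (v i))) Hd.
apply/eqP => /ffunP /(_ i0); rewrite !ffunE.
rewrite /padw -Hm /msz Hi0 subnn /=.
move: Hi0; rewrite -/(msz v) Hm.
by case: (rep S (v i0)).
Qed.

Lemma strip_enc_map d e (h : 'I_d -> 'I_e) (v : 'I_e -> nat) :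
  strip (c0 d) (map (proj h) (enc v)) = enc (fun j => v (h j)).
Proof. by rewrite enc_map strip_nseq strip_id // enc_nohead. Qed.

Lemma enc1 (u : 'I_1 -> nat) :
  map (fun c : pad_letter Sigma 1 => c ord0) (enc u) = map Some (rep S (u ord0)).
Proof.
have Hm : msz u = size (rep S (u ord0)) by rewrite /msz big_ord1.
apply: (@eq_from_nth _ None); first by rewrite size_map size_enc Hm size_map.
move=> p; rewrite size_map size_enc => Hp.
rewrite (nth_map (c0 1)) ?size_enc // /enc nth_mkseq // ffunE /padw Hm subnn.
by [].
Qed.

Lemma enc_inj d (v v' : 'I_d -> nat) : enc v = enc v' -> v = v'.
Proof.
move=> H; apply: funext => i.
have := strip_enc_map (fun _ : 'I_1 => i) v; rewrite H strip_enc_map => H1.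
have H3 := congr1 (map (fun c : pad_letter Sigma 1 => c ord0)) H1.
rewrite !enc1 /= in H3.
have H4 : injective (@Some Sigma) by move=> a b [].
by apply/esym/(@rep_inj _ S)/(inj_map H4 H3).
Qed.

Definition rec d (P : ('I_d -> nat) -> Prop) :=
  regular (fun w => exists v, P v /\ enc v = w).

Lemma rec_equiv d (P Q : ('I_d -> nat) -> Prop) :
  (forall v, P v <-> Q v) -> rec P -> rec Q.
Proof.
move=> H; apply: regular_ext => w; split; by case=> v [/H Hv Hw]; exists v.
Qed.

Lemma rec_and d (P Q : ('I_d -> nat) -> Prop) :
  rec P -> rec Q -> rec (fun v => P v /\ Q v).
Proof.
move=> H1 H2; apply: (regular_ext _ (regular_and H1 H2)) => w; split.
  case=> [[v [Hv <-]] [v' [Hv' /enc_inj E]]]; subst v'.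
  by exists v.
by case=> v [[Hp Hq] <-]; split; exists v.
Qed.

Lemma rec_or d (P Q : ('I_d -> nat) -> Prop) :
  rec P -> rec Q -> rec (fun v => P v \/ Q v).
Proof.
move=> H1 H2; apply: (regular_ext _ (regular_or H1 H2)) => w; split.
  by case=> [[v [Hv <-]]|[v [Hv <-]]]; exists v; split => //; [left|right].
by case=> v [[Hp|Hq] <-]; [left|right]; exists v.
Qed.

Lemma rec_not d (P : ('I_d -> nat) -> Prop) :
  rec (fun _ : 'I_d -> nat => True) -> rec P -> rec (fun v => ~ P v).
Proof.
move=> HT HP; apply: (regular_ext _ (regular_and HT (regular_compl HP))) => w; split.
  case=> [[v [_ <-]] HN]; exists v; split => // Hv; apply: HN; by exists v.
case=> v [Hv <-]; split; first by exists v.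
by case=> v' [Hv' /enc_inj E]; subst v'.
Qed.

Lemma rec_rename d e (h : 'I_d -> 'I_e) (P : ('I_d -> nat) -> Prop) :
  rec (fun _ : 'I_e -> nat => True) -> rec P -> rec (fun u => P (fun j => u (h j))).
Proof.
move=> HT HP.
have H := regular_and HT (regular_preim (proj h) (regular_strip_preim (c0 d) HP)).
apply: (regular_ext _ H) => w; split.
  case=> [[u [_ <-]] [v [Hv]]]; rewrite strip_enc_map => /enc_inj E; subst v.
  by exists u.
case=> u [Hu <-]; split; first by exists u.
by exists (fun j => u (h j)); rewrite strip_enc_map.
Qed.

Definition ext d (v : 'I_d -> nat) (n : nat) (i : 'I_d.+1) : nat :=
  if unlift ord_max i is Some j then v j else n.

Lemma rec_ex d (P : ('I_d.+1 -> nat) -> Prop) :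
  rec P -> rec (fun v => exists n, P (ext v n)).
Proof.
move=> HP.
have H := regular_strip_image (c0 d) (regular_image (proj (fun j : 'I_d => lift ord_max j)) HP).
apply: (regular_ext _ H) => u; split.
  case=> w' [[w [[v' [Hv' <-]] <-]] <-]; rewrite strip_enc_map.
  exists (fun j => v' (lift ord_max j)); split => //; exists (v' ord_max).
  suff -> : ext (fun j => v' (lift ord_max j)) (v' ord_max) = v' by [].
  apply: funext => i; rewrite /ext; by case: unliftP => [j ->|->].
case=> v [[n Hn] <-].
exists (map (proj (fun j : 'I_d => lift ord_max j)) (enc (ext v n))); split.
  by exists (enc (ext v n)); split => //; exists (ext v n).
rewrite strip_enc_map; congr enc; apply: funext => j.
by rewrite /ext liftK.
Qed.

Lemma valid_char d (w : seq (pad_letter Sigma d)) :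
  (exists v : 'I_d -> nat, enc v = w) <->
  nohead (c0 d) w /\ forall i : 'I_d, exists n : 'I_1 -> nat,
      enc n = strip (c0 1) (map (proj (fun _ : 'I_1 => i)) w).
Proof.
split.
  case=> v <-; split; first exact: enc_nohead.
  by move=> i; exists (fun _ => v i); rewrite strip_enc_map.
case=> Hn /fin_all_exists [f Hf].
pose v i := f i ord0.
have Hfi : forall i, strip (c0 1) (map (proj (fun _ : 'I_1 => i)) w) = enc (fun _ : 'I_1 => v i).
  move=> i; rewrite -Hf; congr enc; apply: funext => o; by rewrite (ord1 o).
have Hdec : forall i, exists k, map (proj (fun _ : 'I_1 => i)) w =
          nseq k (c0 1) ++ enc (fun _ : 'I_1 => v i).
  move=> i; have [k Hk] := strip_decomp (c0 1) (map (proj (fun _ : 'I_1 => i)) w).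
  by exists k; rewrite -Hfi.
have Hsz1 : forall i, msz (fun _ : 'I_1 => v i) = size (rep S (v i)).
  by move=> i; rewrite /msz big_ord1.
have Hsize : size w = msz v.
  apply/eqP; rewrite eqn_leq; apply/andP; split; last first.
    apply/bigmax_leqP => i _; have [k Hk] := Hdec i.
    by rewrite -(size_map (proj (fun _ : 'I_1 => i))) Hk size_cat size_enc Hsz1 leq_addl.
  case: w Hn Hdec Hfi Hf => [|a w'] // Hn Hdec Hfi Hf.
  have [i Hi] : exists i, a i != None.
    apply/existsP; apply: contraR Hn; rewrite negb_exists => /forallP Ha.
    apply/eqP/ffunP => i; rewrite ffunE; exact/eqP/negPn/Ha.
  have [[|k] Hk] := Hdec i.
    by rewrite -(size_map (proj (fun _ : 'I_1 => i))) Hk /= size_enc Hsz1 msz_ge.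
  move: Hk => /= [] /ffunP /(_ ord0); rewrite !ffunE => Hai.
  by rewrite Hai in Hi.
have Hmap : forall i, map (proj (fun _ : 'I_1 => i)) w = map (proj (fun _ : 'I_1 => i)) (enc v).
  move=> i; have [k Hk] := Hdec i; rewrite Hk enc_map; congr (_ ++ _).
  have := congr1 size Hk; rewrite size_map size_cat size_nseq size_enc Hsize => Hs.
  by rewrite Hs addnK.
exists v; apply: (@eq_from_nth _ (c0 d)); first by rewrite size_enc Hsize.
move=> p Hp; apply/ffunP => i.
have := congr1 (fun s => nth (c0 1) s p) (Hmap i).
rewrite /= (@nth_map _ (c0 d) _ (c0 1) (proj (fun _ : 'I_1 => i)) p w); last by rewrite Hsize -size_enc.
rewrite (@nth_map _ (c0 d) _ (c0 1) (proj (fun _ : 'I_1 => i)) p (enc v)) //.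
by move/ffunP/(_ ord0); rewrite !ffunE.
Qed.

Lemma valid_all d : rec (fun _ : 'I_1 -> nat => True) -> rec (fun _ : 'I_d -> nat => True).
Proof.
move=> H1.
have H1' : regular (fun u : seq (pad_letter Sigma 1) => exists n : 'I_1 -> nat, enc n = u).
  by apply: (regular_ext _ H1) => u; split; case=> n; [case=> _|]; exists n.
have H := regular_and (regular_nohead (c0 d)) (regular_all
   (fun i : 'I_d => regular_preim (proj (fun _ : 'I_1 => i)) (regular_strip_preim (c0 1) H1'))).
apply: (regular_ext _ H) => w; split.
  move/valid_char => [v Hv]; by exists v.
by case=> v [_ Hv]; apply/valid_char; exists v.
Qed.

End Enc.

Definition ofv d (v : 'I_d -> nat) (y : nat) : nat :=
  match (insub y : option 'I_d) with Some j => v j | None => 0 end.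

Lemma ofv_lt d (v : 'I_d -> nat) y (H : y < d) : ofv v y = v (Ordinal H).
Proof. by rewrite /ofv insubT. Qed.

Lemma ofv_inord d (v : 'I_d.+1 -> nat) y : y < d.+1 -> ofv v y = v (inord y).
Proof. move=> H; rewrite ofv_lt; congr v; apply: val_inj; by rewrite /= inordK. Qed.

Lemma ext_inord d (v : 'I_d -> nat) n y : y < d -> ext v n (inord y) = ofv v y.
Proof.
move=> H; rewrite /ext; case: unliftP => [j Hj|Hj].
  rewrite (ofv_lt v H); congr v; apply: val_inj => /=.
  have := congr1 val Hj; rewrite /= inordK ?(ltnW (ltn_ord _)) //; last by rewrite ltnS ltnW.
  by rewrite /bump leqNgt (ltn_ord j) add0n.
have := congr1 val Hj; rewrite /= inordK; last by rewrite ltnS ltnW.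
by move=> E; rewrite E ltnn in H.
Qed.

Lemma ext_max d (v : 'I_d -> nat) n : ext v n ord_max = n.
Proof. by rewrite /ext unlift_none. Qed.

Definition env := nat -> nat.
Definition upd (e : env) (z n : nat) : env := fun y => if y == z then n else e y.

Definition dep (P : env -> Prop) d :=
  forall e e', (forall y, y < d -> e y = e' y) -> (P e <-> P e').

Lemma dep_mono P d d' : dep P d -> d <= d' -> dep P d'.
Proof. move=> H Hd e e' He; apply: H => y Hy; apply: He; exact: leq_trans Hy Hd. Qed.

Lemma dep_tr P d e e' : dep P d -> (forall y, y < d -> e y = e' y) -> P e -> P e'.
Proof. by move=> H He; case: (H e e' He). Qed.

Section Rec.
Variables (Sigma A : finType) (S : ANS Sigma) (x : nat -> A).
Hypothesis HT1 : rec S (fun _ : 'I_1 -> nat => True).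
Hypothesis Hadd : rec S (fun v : 'I_3 -> nat => v (inord 2) = v (inord 0) + v (inord 1)).
Hypothesis Hlet : forall a, rec S (fun v : 'I_1 -> nat => x (v ord0) = a).

Definition Rec (P : env -> Prop) :=
  exists d, dep P d /\ forall d', d <= d' -> rec S (fun v : 'I_d' -> nat => P (ofv v)).

Lemma HT d : rec S (fun _ : 'I_d -> nat => True).
Proof. exact: valid_all. Qed.

Lemma Rec_equiv P Q : (forall e, P e <-> Q e) -> Rec P -> Rec Q.
Proof.
move=> H [d [Hd Hr]]; exists d; split.
  by move=> e e' He; rewrite -!H; apply: Hd.
move=> d' Hd'; apply: rec_equiv (Hr d' Hd') => v; exact: H.
Qed.

Lemma Rec_const (C : Prop) : Rec (fun _ => C).
Proof.
exists 0; split => // d' _; case: (pselect C) => HC.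
  by apply: rec_equiv (HT d') => v.
apply: (regular_ext _ (regular_const _ False)) => w; split => //.
by case=> v [].
Qed.

Lemma Rec_and P Q : Rec P -> Rec Q -> Rec (fun e => P e /\ Q e).
Proof.
move=> [d1 [H1 R1]] [d2 [H2 R2]]; exists (maxn d1 d2); split.
  move=> e e' He; rewrite (dep_mono H1 (leq_maxl d1 d2) He) (dep_mono H2 (leq_maxr d1 d2) He).
  by [].
move=> d' Hd'; rewrite geq_max in Hd'; case/andP: Hd' => Hd1 Hd2.
exact: rec_and (R1 _ Hd1) (R2 _ Hd2).
Qed.

Lemma Rec_or P Q : Rec P -> Rec Q -> Rec (fun e => P e \/ Q e).
Proof.
move=> [d1 [H1 R1]] [d2 [H2 R2]]; exists (maxn d1 d2); split.
  move=> e e' He; rewrite (dep_mono H1 (leq_maxl d1 d2) He) (dep_mono H2 (leq_maxr d1 d2) He).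
  by [].
move=> d' Hd'; rewrite geq_max in Hd'; case/andP: Hd' => Hd1 Hd2.
exact: rec_or (R1 _ Hd1) (R2 _ Hd2).
Qed.

Lemma Rec_not P : Rec P -> Rec (fun e => ~ P e).
Proof.
move=> [d [H R]]; exists d; split; first by move=> e e' He; rewrite (H _ _ He).
move=> d' Hd'; exact: rec_not (HT d') (R _ Hd').
Qed.

Lemma Rec_ex z P : Rec P -> Rec (fun e => exists n, P (upd e z n)).
Proof.
move=> [d [H R]]; exists d; split.
  move=> e e' He; split; case=> n Hn; exists n; apply: (dep_tr H _ Hn) => y Hy; rewrite /upd;
    case: eqP => // _; [|symmetry]; exact: He.
move=> d' Hd'.
pose D := maxn d' z.+1.
have HD : d <= D by apply: leq_trans Hd' (leq_maxl _ _).
pose h (y : 'I_D) : 'I_d'.+1 := if (val y < d') && (val y != z) then inord (val y) else ord_max.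
have R1 := rec_ex (rec_rename h (HT d'.+1) (R D HD)).
apply: rec_equiv R1 => v; split; case=> n Hn; exists n; apply: (dep_tr H _ Hn) => y Hy.
  have HyD : y < D := leq_trans Hy HD.
  rewrite (ofv_lt _ HyD) /h /= /upd; case: eqP => [->|/eqP Hz].
    by rewrite andbF ext_max.
  by rewrite andbT (leq_trans Hy Hd') ext_inord // (leq_trans Hy Hd').
have HyD : y < D := leq_trans Hy HD.
rewrite (ofv_lt _ HyD) /h /= /upd; case: eqP => [->|/eqP Hz].
  by rewrite andbF ext_max.
by rewrite andbT (leq_trans Hy Hd') ext_inord // (leq_trans Hy Hd').
Qed.

Lemma Rec_add i j k : Rec (fun e => e k = e i + e j).
Proof.
exists (maxn (maxn i j) k).+1; split.
  move=> e e' He; rewrite !He //; rewrite ltnS ?leq_maxr //.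
    by rewrite (leq_trans (leq_maxr i j)) ?leq_maxl.
  by rewrite (leq_trans (leq_maxl i j)) ?leq_maxl.
case=> [|d'] Hd' //.
have Hk : k < d'.+1 by apply: leq_trans Hd'; rewrite ltnS leq_maxr.
have Hi : i < d'.+1 by apply: leq_trans Hd'; rewrite ltnS (leq_trans (leq_maxl i j)) ?leq_maxl.
have Hj : j < d'.+1 by apply: leq_trans Hd'; rewrite ltnS (leq_trans (leq_maxr i j)) ?leq_maxl.
pose h (y : 'I_3) : 'I_d'.+1 := inord (nth 0 [:: i; j; k] y).
apply: rec_equiv (rec_rename h (HT _) Hadd) => v.
by rewrite /h !inordK // !ofv_inord.
Qed.

Lemma Rec_let i a : Rec (fun e => x (e i) = a).
Proof.
exists i.+1; split; first by move=> e e' He; rewrite He.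
case=> [|d'] Hd' //.
pose h (y : 'I_1) : 'I_d'.+1 := inord i.
apply: rec_equiv (rec_rename h (HT _) (Hlet a)) => v.
by rewrite ofv_inord.
Qed.

Lemma Rec_to_rec i P : Rec P -> dep P i -> rec S (fun v : 'I_i -> nat => P (ofv v)).
Proof.
move=> [d [_ R]] Hi.
have : rec S (fun v : 'I_(i + (d - i)) -> nat => P (ofv v)).
  apply: R; by rewrite -leq_subLR.
elim: (d - i) => [|n IH]; first by rewrite addn0.
rewrite addnS => /rec_ex H; apply: IH; apply: rec_equiv H => v; split.
  case=> m Hm; apply: (dep_tr (dep_mono Hi (leq_addr n i)) _ Hm) => y Hy.
  by rewrite ofv_inord ?ext_inord // ltnS ltnW.
move=> Hv; exists 0; apply: (dep_tr (dep_mono Hi (leq_addr n i)) _ Hv) => y Hy.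
by rewrite ofv_inord ?ext_inord // ltnS ltnW.
Qed.

Lemma Rec_imp P Q : Rec P -> Rec Q -> Rec (fun e => P e -> Q e).
Proof.
move=> HP HQ; apply: Rec_equiv (Rec_or (Rec_not HP) HQ) => e; split.
  by case=> H //= /H.
by case: (pselect (P e)) => H Himp; [right; exact: Himp|left].
Qed.

Lemma Rec_all z P : Rec P -> Rec (fun e => forall n, P (upd e z n)).
Proof.
move=> HP; apply: Rec_equiv (Rec_not (Rec_ex z (Rec_not HP))) => e; split.
  move=> H n; case: (pselect (P (upd e z n))) => // Hn; exfalso; apply: H; by exists n.
by move=> H [n]; apply.
Qed.

Lemma Rec_exseq (T : eqType) (s : seq T) (P : T -> env -> Prop) :
  (forall t, Rec (P t)) -> Rec (fun e => exists2 t, t \in s & P t e).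
Proof.
move=> H; elim: s => [|t s IH].
  by apply: Rec_equiv (Rec_const False) => e; split => // [[]].
apply: Rec_equiv (Rec_or (H t) IH) => e; split.
  by case=> [Ht|[t' Ht' Hp]]; [exists t; rewrite ?mem_head|exists t'; rewrite // inE Ht' orbT].
case=> t'; rewrite inE => /orP[/eqP ->|Ht'] Hp; [left|right; exists t'] => //.
Qed.

Lemma Rec_exfin (T : finType) (P : T -> env -> Prop) :
  (forall t, Rec (P t)) -> Rec (fun e => exists t, P t e).
Proof.
move=> H; apply: Rec_equiv (Rec_exseq (enum T) H) => e; split.
  by case=> t _ Hp; exists t.
by case=> t Hp; exists t; rewrite ?mem_enum.
Qed.

Lemma Rec_allfin (T : finType) (P : T -> env -> Prop) :
  (forall t, Rec (P t)) -> Rec (fun e => forall t, P t e).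
Proof.
move=> H; apply: Rec_equiv (Rec_not (Rec_exfin (fun t => Rec_not (H t)))) => e; split.
  move=> Hn t; case: (pselect (P t e)) => // Ht; exfalso; apply: Hn; by exists t.
by move=> Ha [t]; apply.
Qed.


Lemma upd_eq e z n : upd e z n z = n.
Proof. by rewrite /upd eqxx. Qed.
Lemma upd_ne e z n y : y != z -> upd e z n y = e y.
Proof. by rewrite /upd => /negbTE ->. Qed.

Ltac updsimp := repeat (rewrite upd_eq || (rewrite upd_ne; last by lia)).

Lemma Rec_le a b : Rec (fun e => e a <= e b).
Proof.
pose z := (maxn a b).+1.
apply: Rec_equiv (Rec_ex z (Rec_add a z b)) => e.
have Ha : a != z by rewrite /z; lia.
have Hb : b != z by rewrite /z; lia.
split.
  by case=> n; rewrite upd_eq !upd_ne // => ->; rewrite leq_addr.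
by move=> H; exists (e b - e a); rewrite upd_eq !upd_ne // subnKC.
Qed.

Lemma Rec_eq a b : Rec (fun e => e a = e b).
Proof.
apply: Rec_equiv (Rec_and (Rec_le a b) (Rec_le b a)) => e.
by split; [case=> H1 H2; apply/eqP; rewrite eqn_leq H1 H2|move=> ->].
Qed.

Lemma Rec_lt a b : Rec (fun e => e a < e b).
Proof.
apply: Rec_equiv (Rec_not (Rec_le b a)) => e.
by rewrite ltnNge; split => [/negP|/negP].
Qed.

Lemma Rec_cnt_seq (s : seq nat) m : forall c, Rec (fun e => count (fun k => e k == e m) s = c).
Proof.
elim: s => [|k s IH] c /=.
  by apply: Rec_equiv (Rec_const (0 = c)).
apply: Rec_equiv (Rec_or (Rec_and (Rec_eq k m) (Rec_and (Rec_const (0 < c)) (IH c.-1)))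
                         (Rec_and (Rec_not (Rec_eq k m)) (IH c))) => e.
split.
  case=> [[-> [Hc ->]]|[/eqP/negbTE -> ->]] //.
  by rewrite eqxx add1n prednK.
case: eqP => [->|Hne] /=; last by move=> H; right.
by move=> <-; left; split => //.
Qed.

Section Core.
Variable i : nat.

Definition cnt (e : env) j := count (fun k => e k == j) (iota 0 i).

Lemma Rec_cnt m c : Rec (fun e => c = (cnt e (e m)).+1).
Proof.
apply: Rec_equiv (Rec_and (Rec_const (0 < c)) (Rec_cnt_seq (iota 0 i) m c.-1)) => e.
rewrite /cnt; split; first by case=> Hc H; rewrite H prednK.
by move=> ->; split.
Qed.

Definition AgF q q' n (b : bool) (e : env) :=
  forall l, (if b then l <= e n else l < e n) -> x (e q + l) = x (e q' + l).

Lemma Rec_AgF q q' n b : Rec (AgF q q' n b).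
Proof.
pose w := (maxn q (maxn q' n)).+1.
have Hc : Rec (fun e => if b then e w <= e n else e w < e n).
  by case: b; [apply: Rec_le|apply: Rec_lt].
have H := Rec_all w (Rec_imp Hc (Rec_ex w.+1 (Rec_ex w.+2
   (Rec_and (Rec_add q w w.+1) (Rec_and (Rec_add q' w w.+2)
     (Rec_exfin (fun a => Rec_and (Rec_let w.+1 a) (Rec_let w.+2 a)))))))).
have Hw1 : q < w by rewrite /w; lia.
have Hw2 : q' < w by rewrite /w; lia.
have Hw3 : n < w by rewrite /w; lia.
apply: Rec_equiv H => e; rewrite /AgF; split => H l.
  move=> Hcond; have := H l; updsimp; move=> /(_ Hcond) [r [r']].
  updsimp; case=> -> [-> [a [H1 H2]]].
  by rewrite H1 H2.
updsimp => Hcond.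
exists (e q + l); exists (e q' + l); updsimp; split => //; split => //.
by exists (x (e q + l)); updsimp; split => //; rewrite H.
Qed.

Definition LetF q m a (e : env) := x (e q + e m) = a.

Lemma Rec_LetF q m a : Rec (LetF q m a).
Proof.
pose w := (maxn q m).+1.
have Hw1 : q < w by rewrite /w; lia.
have Hw2 : m < w by rewrite /w; lia.
apply: Rec_equiv (Rec_ex w (Rec_and (Rec_add q m w) (Rec_let w a))) => e.
rewrite /LetF; split; first by case=> n; updsimp; case=> ->.
by move=> H; exists (e q + e m); updsimp.
Qed.

Definition B2 (R : nat -> nat -> nat -> env -> Prop) (m m' z : nat) (e2 : env) :=
  AgF z.+1 z m true e2 /\ R m' z.+1 z.+2 e2.

Definition B1 (R : nat -> nat -> nat -> env -> Prop) (m qn z : nat) (a : A) (e1 : env) :=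
  AgF z qn m false e1 /\ LetF z m a e1 /\
  forall m' : 'I_i, m < m' -> e1 (m'.-1) = e1 m -> e1 m < e1 m' ->
    exists n2, B2 R m m' z (upd e1 z.+1 n2).

Fixpoint Psi (f m qn z : nat) (e : env) : Prop :=
  match f with
  | 0 => True
  | f'.+1 =>
    exists T : {set A}, #|T| = (cnt e (e m)).+1 /\
    forall a, a \in T -> exists n1, B1 (Psi f') m qn z a (upd e z n1)
  end.

Lemma Rec_Psi f : forall m qn z, Rec (Psi f m qn z).
Proof.
elim: f => [|f IH] m qn z; first exact: (Rec_const True).
apply: Rec_exfin => T; apply: Rec_and.
  apply: Rec_equiv (Rec_cnt m #|T|) => e; by split => ->.
apply: Rec_allfin => a; apply: Rec_imp; first exact: (Rec_const (a \in T)).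
apply: (Rec_ex z); apply: Rec_and; first exact: Rec_AgF.
apply: Rec_and; first exact: Rec_LetF.
apply: Rec_allfin => m'; apply: Rec_imp; first exact: (Rec_const (m < m')).
apply: Rec_imp; first exact: Rec_eq.
apply: Rec_imp; first exact: Rec_lt.
apply: (Rec_ex z.+1); apply: Rec_and; first exact: Rec_AgF.
exact: IH.
Qed.

End Core.
End Rec.

Section Game.
Variables (A : finType) (x : nat -> A).

Definition good (al : nat -> nat) (u : seq A) :=
  exists s : strategy A,
    (forall h, size u <= size h -> #|s h| = (al (size h)).+1) /\
    (forall a, prefix_of a (size u) = u ->
       (forall j, size u <= j -> a j \in s (prefix_of a j)) -> orbit_closure x a).

Definition xs q j := mkseq (fun l => x (q + l)) j.

Lemma prefixS (a : nat -> A) j : prefix_of a j.+1 = rcons (prefix_of a j) (a j).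
Proof. exact: mkseqS. Qed.

Lemma size_prefix (a : nat -> A) j : size (prefix_of a j) = j.
Proof. exact: size_mkseq. Qed.

Lemma nth_prefix (a : nat -> A) j l x0 : l < j -> nth x0 (prefix_of a j) l = a l.
Proof. by move=> H; rewrite /prefix_of nth_mkseq. Qed.

Lemma win_good al : winning_shift (orbit_closure x) al <-> good al [::].
Proof.
split; case=> s [H1 H2]; exists s; split.
- by move=> h _; apply: H1.
- by move=> a _ Ha; apply: H2 => j; apply: Ha.
- by move=> h; apply: H1.
- by move=> a Ha; apply: H2.
Qed.

Fixpoint build (s : strategy A) (u : seq A) (n : nat) : seq A :=
  if n is n'.+1 then
    rcons (build s u n') (if n' < size u then nth (x 0) u n'
                          else odflt (x 0) [pick z in s (build s u n')])
  else [::].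

Lemma size_build s u n : size (build s u n) = n.
Proof. by elim: n => //= n IH; rewrite size_rcons IH. Qed.

Lemma nth_build s u n j : j < n -> nth (x 0) (build s u n) j = nth (x 0) (build s u j.+1) j.
Proof.
elim: n => // n IH; rewrite ltnS leq_eqVlt => /orP[/eqP ->|Hj] //.
by rewrite /= nth_rcons size_build Hj IH.
Qed.

Lemma build_take s u n : n <= size u -> build s u n = take n u.
Proof.
elim: n => [|n IH] Hn /=; first by rewrite take0.
by rewrite IH ?(ltnW Hn) // Hn (take_nth (x 0)).
Qed.

Lemma good_factor al u : good al u -> exists q, u = xs q (size u).
Proof.
case=> s [H1 H2].
pose a j := nth (x 0) (build s u j.+1) j.
have Hpre : forall j, prefix_of a j = build s u j.
  move=> j; apply: (@eq_from_nth _ (x 0)); first by rewrite size_prefix size_build.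
  move=> l; rewrite size_prefix => Hl; rewrite nth_prefix // /a.
  by rewrite (nth_build _ _ Hl).
have Hu : prefix_of a (size u) = u by rewrite Hpre build_take // take_size.
have : orbit_closure x a.
  apply: H2 => // j Hj; rewrite Hpre /a /= nth_rcons size_build ltnn eqxx ltnNge Hj /=.
  case: pickP => [z Hz //|Hn].
  have : 0 < #|s (build s u j)| by rewrite H1 // size_build.
  by case/card_gt0P => z Hz; move: (Hn z); rewrite Hz.
move/(_ (size u)) => [q Hq]; exists q.
rewrite -{1}Hu; apply: (@eq_from_nth _ (x 0)); first by rewrite size_prefix size_mkseq.
by move=> l; rewrite size_prefix => Hl; rewrite nth_prefix // nth_mkseq // Hq.
Qed.

Lemma good_split al u :
  good al u <-> exists T : {set A}, #|T| = (al (size u)).+1 /\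
                 forall z, z \in T -> good al (rcons u z).
Proof.
split.
  case=> s [H1 H2]; exists (s u); split; first exact: H1.
  move=> z Hz; exists s; split.
    by move=> h; rewrite size_rcons => Hh; apply: H1; apply: ltnW.
  move=> a; rewrite size_rcons prefixS => /rcons_inj [Ha Haz] Hf.
  apply: H2 => // j; rewrite leq_eqVlt => /orP[/eqP <-|Hj].
    by rewrite Ha Haz.
  exact: Hf.
case=> T [HT Hg].
have [z0 Hz0] : exists z0, z0 \in T by apply/card_gt0P; rewrite HT.
have Hc : forall z, exists s : strategy A,
    (forall h, (size u).+1 <= size h -> #|s h| = (al (size h)).+1) /\
    (z \in T -> forall a, prefix_of a (size u).+1 = rcons u z ->
       (forall j, (size u).+1 <= j -> a j \in s (prefix_of a j)) -> orbit_closure x a).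
  move=> z; case: (boolP (z \in T)) => Hz.
    have [s [H1 H2]] := Hg z Hz; exists s; rewrite size_rcons in H1 H2; split => //.
  have [s [H1 H2]] := Hg z0 Hz0; exists s; rewrite size_rcons in H1; split => //.
have [F HF] := fin_all_exists Hc.
exists (fun h => if size h == size u then T else F (nth (x 0) h (size u)) h); split.
  move=> h Hh; case: eqP => [Heq|/eqP Hne]; first by rewrite HT Heq.
  by apply: (HF _).1; rewrite ltn_neqAle eq_sym Hne.
move=> a Ha Hf.
have HzT : a (size u) \in T.
  by have := Hf (size u) (leqnn _); rewrite size_prefix eqxx.
apply: (HF (a (size u))).2 => //; first by rewrite prefixS Ha.
move=> j Hj; have := Hf j (ltnW Hj); rewrite size_prefix eqn_leq leqNgt Hj /=.
by rewrite nth_prefix.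
Qed.

Lemma good_end al u q :
  (forall j, size u <= j -> al j = 0) -> u = xs q (size u) -> good al u.
Proof.
move=> Hz Hu; exists (fun h => [set x (q + size h)]); split.
  by move=> h Hh; rewrite cards1 Hz.
move=> a Ha Hf k; exists q => i _.
case: (ltnP i (size u)) => Hi.
  by rewrite -(nth_prefix a (x 0) Hi) Ha Hu nth_mkseq.
by have := Hf i Hi; rewrite inE size_prefix => /eqP.
Qed.

Lemma good_gap al n u :
  (forall j, size u <= j < size u + n -> al j = 0) ->
  (good al u <-> exists v, size v = n /\ good al (u ++ v)).
Proof.
elim: n u => [|n IH] u Hz.
  by split; [move=> H; exists [::]; rewrite cats0|case=> v [/size0nil ->]; rewrite cats0].
have H0 : al (size u) = 0 by apply: Hz; rewrite leqnn addnS ltnS leq_addr.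
rewrite good_split H0; split.
  case=> T [/eqP/cards1P [z ->] Hg].
  have Hgz := Hg z (set11 z).
  have Hz' : forall j, size (rcons u z) <= j < size (rcons u z) + n -> al j = 0.
    by move=> j; rewrite size_rcons addSnnS => /andP[H1 H2]; apply: Hz; rewrite H2 ltnW.
  have [v [Hv Hg']] := (IH _ Hz').1 Hgz.
  by exists (z :: v); rewrite /= Hv -cat_rcons.
case=> v [Hv Hg]; case: v Hv Hg => [|z v] /= Hv Hg; first by []. case: Hv => Hv.
exists [set z]; rewrite cards1; split => // z'; rewrite inE => /eqP ->.
have Hz' : forall j, size (rcons u z) <= j < size (rcons u z) + n -> al j = 0.
  by move=> j; rewrite size_rcons addSnnS => /andP[H1 H2]; apply: Hz; rewrite H2 ltnW.
by apply/(IH _ Hz'); exists v; rewrite cat_rcons.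
Qed.

End Game.

Ltac updsimp := repeat (rewrite upd_eq || (rewrite upd_ne; last by lia)).

Section Sem.
Variables (A : finType) (x : nat -> A) (i : nat).

Definition Sorted (e : env) := forall a b, a <= b -> b < i -> e a <= e b.

Lemma xs_eq q q' j : (forall l, l < j -> x (q + l) = x (q' + l)) -> xs x q j = xs x q' j.
Proof.
move=> H; apply: (@eq_from_nth _ (x 0)); rewrite !size_mkseq // => l Hl.
by rewrite !nth_mkseq // H.
Qed.

Lemma take_xs q k j : k <= j -> take k (xs x q j) = xs x q k.
Proof.
move=> H; apply: (@eq_from_nth _ (x 0)).
  by rewrite size_takel !size_mkseq.
move=> l; rewrite size_takel ?size_mkseq // => Hl.
by rewrite nth_take // !nth_mkseq //; lia.
Qed.

Lemma xs_eqP q q' j : xs x q j = xs x q' j -> forall l, l < j -> x (q + l) = x (q' + l).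
Proof.
move=> H l Hl; have := congr1 (fun s => nth (x 0) s l) H.
by rewrite /= /xs !nth_mkseq.
Qed.

Lemma xs_S q j : xs x q j.+1 = rcons (xs x q j) (x (q + j)).
Proof. exact: mkseqS. Qed.

Lemma good_rcons al q j a :
  good x al (rcons (xs x q j) a) <->
  exists q1, (forall l, l < j -> x (q1 + l) = x (q + l)) /\ x (q1 + j) = a /\
             good x al (xs x q1 j.+1).
Proof.
split.
  move=> H; have [q1 Hq1] := good_factor H.
  move: Hq1; rewrite size_rcons size_mkseq xs_S => Hq1.
  have [E1 E2] := rcons_inj Hq1.
  exists q1; split; first by move=> l Hl; symmetry; apply: xs_eqP E1 l Hl.
  by split; [rewrite -E2|rewrite xs_S -E1 -E2].
case=> q1 [Hag [Ha Hg]]; move: Hg; rewrite xs_S Ha.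
by rewrite (xs_eq (q := q1) (q' := q)).
Qed.

Lemma cnt0 (e : env) j : (forall k, k < i -> e k != j) -> cnt i e j = 0.
Proof.
move=> H; apply/eqP; rewrite -leqn0 leqNgt -has_count; apply/hasPn => k.
by rewrite mem_iota add0n => /andP[_ /H].
Qed.

Lemma cnt_upd (e : env) z n : i <= z -> cnt i (upd e z n) = cnt i e.
Proof.
move=> Hz; apply: funext => j; apply: eq_in_count => k; rewrite mem_iota add0n => /andP[_ Hk].
by rewrite upd_ne //; lia.
Qed.

Lemma Sorted_upd (e : env) z n : i <= z -> Sorted e -> Sorted (upd e z n).
Proof. move=> Hz H a b Hab Hb; rewrite !upd_ne; [exact: H| |]; lia. Qed.

Lemma exT_iff (C : {set A} -> Prop) (X Y : A -> Prop) : (forall a, X a <-> Y a) ->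
  ((exists T : {set A}, C T /\ forall a, a \in T -> X a) <->
   (exists T : {set A}, C T /\ forall a, a \in T -> Y a)).
Proof.
move=> H; split; case=> T [HC HT]; exists T; split => // a Ha; have := HT a Ha; case: (H a) => //; auto.
Qed.

Lemma Psi_sem f : forall m qn z e, Sorted e -> m < i -> i <= qn -> qn < z -> i - m <= f ->
  (Psi x i f m qn z e <-> good x (cnt i e) (xs x (e qn) (e m))).
Proof.
elim: f => [|f IH] m qn z e Hs Hm Hqn Hz Hf; first by lia.
rewrite /= good_split size_mkseq; apply: exT_iff => a.
rewrite good_rcons; split.
- case=> n1; rewrite /B1 /AgF /LetF; updsimp.
  case=> Hag [Hlet Hnext].
  exists n1; split; first by move=> l Hl; apply: Hag.
  split => //.
  pose e1 := upd e z n1.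
  have Hs1 : Sorted e1 by apply: Sorted_upd => //; lia.
  have Hc1 : cnt i e1 = cnt i e by apply: cnt_upd; lia.
  have He1 : forall k, k < i -> e1 k = e k by move=> k Hk; rewrite /e1 upd_ne //; lia.
  case: (pselect (exists m0, (m < m0 < i) && (e m < e m0))) => [Hex|Hnex].
    case: (ex_minnP Hex) => ms /andP[/andP[Hms1 Hms2] Hms3] Hmin.
    have Hprev : e ms.-1 = e m.
      case: (ltnP m ms.-1) => H1.
        have H2 : ~~ (e m < e ms.-1).
          apply/negP => H3; have := Hmin ms.-1; rewrite H1 H3 /= => /(_ _)/=.
          have -> : ms.-1 < i by lia.
          by move=> /(_ isT); lia.
        have := Hs m ms.-1 (ltnW H1); lia.
      by have -> : ms.-1 = m by lia.
    have Hp1 : e1 (ms.-1) = e m by rewrite !He1 //; lia.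
    have Hp2 : e m < e1 ms by rewrite !He1.
    have [n2 Hn2] := Hnext (Ordinal Hms2) Hms1 Hp1 Hp2.
    move: Hn2; rewrite /B2 /AgF; updsimp; case=> Hag2 HPsi.
    have Hs2 : Sorted (upd e1 z.+1 n2) by apply: Sorted_upd => //; lia.
    have HI := IH ms z.+1 z.+2 (upd e1 z.+1 n2) Hs2 Hms2 ltac:(lia) ltac:(lia) ltac:(lia).
    have Hgood : good x (cnt i e) (xs x n2 (e ms)).
      move: (HI.1 HPsi); rewrite upd_eq cnt_upd ?Hc1 ?upd_ne ?He1 //; lia.
    have Hz0 : forall j, (e m).+1 <= j < (e m).+1 + (e ms - (e m).+1) -> cnt i e j = 0.
      move=> j /andP[Hj1 Hj2]; apply: cnt0 => k Hk; apply/eqP => Hkj.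
      case: (leqP k m) => Hkm; first by have := Hs k m Hkm Hm; lia.
      case: (ltnP k ms) => Hkms.
        case: (ltnP (e m) (e k)) => Hek; last lia.
        have := Hmin k; rewrite Hkm Hk Hek /= => /(_ isT); lia.
      have := Hs ms k Hkms Hk; lia.
    have Hz0' : forall j, size (xs x n1 (e m).+1) <= j < size (xs x n1 (e m).+1) + (e ms - (e m).+1) ->
       cnt i e j = 0 by rewrite size_mkseq.
    apply/(good_gap _ Hz0').
    exists (drop (e m).+1 (xs x n2 (e ms))); split.
      by rewrite size_drop size_mkseq.
    have -> : xs x n1 (e m).+1 = take (e m).+1 (xs x n2 (e ms)).
      rewrite take_xs; last by lia.
      apply: xs_eq => l Hl; symmetry; apply: Hag2; lia.
    by rewrite cat_take_drop.
  apply: (good_end (q := n1)); last by rewrite size_mkseq.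
  move=> j; rewrite size_mkseq => Hj; apply: cnt0 => k Hk; apply/eqP => Hkj.
  case: (leqP k m) => Hkm; first by have := Hs k m Hkm Hm; lia.
  apply: Hnex; exists k; rewrite Hkm Hk /=; lia.
- case=> q1 [Hag [Hlet Hg]].
  exists q1; rewrite /B1 /AgF /LetF; updsimp.
  split; first by move=> l Hl; apply: Hag.
  split => //.
  move=> [ms Hms2] /= Hms1; rewrite !upd_ne; try lia.
  move=> Hprev Hlt.
  have Hz0 : forall j, (e m).+1 <= j < (e m).+1 + (e ms - (e m).+1) -> cnt i e j = 0.
    move=> j /andP[Hj1 Hj2]; apply: cnt0 => k Hk; apply/eqP => Hkj.
    case: (leqP k m) => Hkm; first by have := Hs k m Hkm Hm; lia.
    case: (ltnP k ms) => Hkms.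
      have H1 := Hs k ms.-1 ltac:(lia) ltac:(lia).
      have H2 := Hs m k ltac:(lia) Hk; lia.
    have := Hs ms k Hkms Hk; lia.
  have Hz0' : forall j, size (xs x q1 (e m).+1) <= j < size (xs x q1 (e m).+1) + (e ms - (e m).+1) ->
     cnt i e j = 0 by rewrite size_mkseq.
  have [v [Hv Hgv]] := (good_gap _ Hz0').1 Hg.
  have [q2 Hq2] := good_factor Hgv.
  move: Hq2; rewrite size_cat size_mkseq Hv.
  have -> : (e m).+1 + (e ms - (e m).+1) = e ms by lia.
  move=> Hq2.
  exists q2; rewrite /B2 /AgF; updsimp.
  split.
    move=> l; updsimp => Hl.
    have := congr1 (take (e m).+1) Hq2; rewrite take_size_cat ?size_mkseq //.
    rewrite take_xs; last by lia.
    move=> /(@xs_eqP q1 q2 (e m).+1) H; symmetry; apply: H; lia.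
  apply/(IH ms z.+1 z.+2); try lia.
    by apply: Sorted_upd; [lia|apply: Sorted_upd => //; lia].
  rewrite upd_eq !cnt_upd ?upd_ne; try lia.
  by rewrite -Hq2.
Qed.

End Sem.

Section Final.
Variables (Sigma A : finType) (S : ANS Sigma) (x : nat -> A).

Lemma recog_rec d (Y : d.-tuple nat -> Prop) (P : ('I_d -> nat) -> Prop) :
  (forall t, Y t <-> P (tnth t)) -> rec S P -> recognizable S Y.
Proof.
move=> H; apply: regular_ext => w; split.
  case=> v [Hv <-]; exists (mktuple v).
  have E : tnth (mktuple v) = v by apply: funext => j; rewrite tnth_mktuple.
  by rewrite H rep_tupleE E.
by case=> t [/H Ht <-]; exists (tnth t).
Qed.

Lemma rec_recog d (Y : d.-tuple nat -> Prop) (P : ('I_d -> nat) -> Prop) :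
  (forall t, Y t <-> P (tnth t)) -> recognizable S Y -> rec S P.
Proof.
move=> H; apply: regular_ext => w; split.
  by case=> t [/H Ht <-]; exists (tnth t).
case=> v [Hv <-]; exists (mktuple v).
have E : tnth (mktuple v) = v by apply: funext => j; rewrite tnth_mktuple.
by rewrite H rep_tupleE E.
Qed.

Lemma inordE n j (H : j < n.+1) : inord j = Ordinal H.
Proof. by apply: val_inj; rewrite /= inordK. Qed.

Lemma Hadd_of : addable S ->
  rec S (fun v : 'I_3 -> nat => v (inord 2) = v (inord 0) + v (inord 1)).
Proof.
move=> H; apply: (rec_recog _ H) => t.
by rewrite (@inordE 2 2 isT) (@inordE 2 0 isT) (@inordE 2 1 isT).
Qed.

Lemma HT1_of : rec S (fun v : 'I_3 -> nat => v (inord 2) = v (inord 0) + v (inord 1)) ->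
  rec S (fun _ : 'I_1 -> nat => True).
Proof.
move=> H; apply: rec_equiv (rec_ex (rec_ex H)) => v; split => // _.
exists 0; exists (v ord0).
pose w := ext v 0.
have h2 : ext w (v ord0) (inord 2) = v ord0.
  have -> : inord 2 = ord_max :> 'I_3 by apply: val_inj; rewrite /= inordK.
  by rewrite ext_max.
have h0 : ext w (v ord0) (inord 0) = v ord0.
  rewrite ext_inord // ofv_inord // /w ext_inord // ofv_lt.
  by congr v; apply: val_inj.
have h1 : ext w (v ord0) (inord 1) = 0.
  rewrite ext_inord // ofv_inord // /w.
  have -> : inord 1 = ord_max :> 'I_2 by apply: val_inj; rewrite /= inordK.
  by rewrite ext_max.
by rewrite h0 h1 h2 addn0.
Qed.

Lemma Hlet_of : automatic S x -> rec S (fun _ : 'I_1 -> nat => True) ->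
  forall a, rec S (fun v : 'I_1 -> nat => x (v ord0) = a).
Proof.
move=> [Q [q0 [delta [out Hx]]]] HT a.
pose st (o : option Q) (c : option Sigma) :=
  if o is Some q then (if c is Some s then Some (delta q s) else None) else None.
have Hf : forall q r, foldl st (Some q) (map Some r) = Some (foldl delta q r).
  by move=> q r; elim: r q => //= s r IH q; rewrite IH.
pose D := @mkD (pad_letter Sigma 1) (option Q) (Some q0)
  (fun o (c : pad_letter Sigma 1) => st o (c ord0))
  (fun o => if o is Some q then out q == a else false).
have HD : regular (dfa_accepts D) by exists D.
apply: (regular_ext _ (regular_and HT HD)) => w; split.
  case=> [[v [_ <-]]]; rewrite /dfa_accepts /= -(foldl_map' (fun c : pad_letter Sigma 1 => c ord0)).
  rewrite enc1 Hf => /eqP Ha; exists v; split => //; by rewrite Hx.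
case=> v [Hv <-]; split; first by exists v.
rewrite /dfa_accepts /= -(foldl_map' (fun c : pad_letter Sigma 1 => c ord0)).
by rewrite enc1 Hf -Hx Hv eqxx.
Qed.

End Final.

Section TopS.
Variables (Sigma A : finType) (S : ANS Sigma) (x : nat -> A).
Hypothesis HT1 : rec S (fun _ : 'I_1 -> nat => True).
Hypothesis Hadd : rec S (fun v : 'I_3 -> nat => v (inord 2) = v (inord 0) + v (inord 1)).
Hypothesis Hlet : forall a, rec S (fun v : 'I_1 -> nat => x (v ord0) = a).
Variable i : nat.

Definition SortedF (e : env) := forall a b : 'I_i, a <= b -> e a <= e b.
Definition Top (e : env) := SortedF e /\ (i = 0 \/ exists n, Psi x i i 0 i i.+1 (upd e i n)).

Lemma Rec_Top : Rec S Top.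
Proof.
apply: Rec_and.
  apply: (Rec_allfin HT1) => a; apply: (Rec_allfin HT1) => b.
  apply: (Rec_imp HT1); [exact: (Rec_const HT1)|exact: (Rec_le HT1 Hadd)].
apply: Rec_or; first exact: (Rec_const HT1).
apply: (Rec_ex HT1); exact: (Rec_Psi HT1 Hadd Hlet).
Qed.

Lemma SortedFP e : SortedF e <-> Sorted i e.
Proof.
split.
  move=> H a b Hab Hb; have Ha : a < i by lia.
  exact: (H (Ordinal Ha) (Ordinal Hb)).
by move=> H a b Hab; apply: H.
Qed.

Lemma Top_sem e : Top e <-> Sorted i e /\ good x (cnt i e) [::].
Proof.
rewrite /Top SortedFP; split.
- move=> [Hs H]; split => //; case: (posnP i) => [Hi0|Hi].
    apply: (good_end (q := 0)) => // j _; apply: cnt0 => k Hk; lia.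
  move: H => [Hi0|[n Hn]]; first lia.
  have Hs' : Sorted i (upd e i n) by apply: Sorted_upd.
  move: Hn; rewrite Psi_sem //; try lia.
  rewrite cnt_upd // !upd_eq upd_ne; last lia.
  move=> Hg.
  have Hz : forall j, size ([::] : seq A) <= j < size ([::] : seq A) + e 0 -> cnt i e j = 0.
    move=> j Hj0; have Hj : j < e 0 by move: Hj0; rewrite /=; lia.
    apply: cnt0 => k Hk; apply/eqP => Hkj.
    have := Hs 0 k (leq0n _) Hk; lia.
  by apply/(good_gap _ Hz); exists (xs x n (e 0)); rewrite size_mkseq.
- move=> [Hs H]; split => //.
  case: (posnP i) => [Hi|Hi]; [by left|right].
  have Hz : forall j, size ([::] : seq A) <= j < size ([::] : seq A) + e 0 -> cnt i e j = 0.
    move=> j Hj0; have Hj : j < e 0 by move: Hj0; rewrite /=; lia.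
    apply: cnt0 => k Hk; apply/eqP => Hkj.
    have := Hs 0 k (leq0n _) Hk; lia.
  have [v [Hv Hg]] := (good_gap _ Hz).1 H.
  have [q Hq] := good_factor Hg.
  exists q; have Hs' : Sorted i (upd e i q) by apply: Sorted_upd.
  rewrite Psi_sem //; try lia.
  rewrite cnt_upd // !upd_eq upd_ne; last lia.
  by rewrite -Hv -Hq.
Qed.

Lemma dep_Top : dep Top i.
Proof.
move=> e e' He; rewrite !Top_sem.
have Hc : cnt i e = cnt i e'.
  apply: funext => j; apply: eq_in_count => k; rewrite mem_iota add0n => /andP[_ Hk].
  by rewrite He.
rewrite Hc; split; case=> Hs Hg; split => // a b Hab Hb; have Ha : a < i by lia.
  by rewrite -!He //; apply: Hs.
by rewrite !He //; apply: Hs.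
Qed.

End TopS.

Lemma sum_count_ord N (s : seq nat) : all (fun a => a < N) s ->
  \sum_(j < N) count (pred1 (j : nat)) s = size s.
Proof.
elim: s => [|a s IH] /=; first by rewrite big1.
case/andP => Ha Hs.
rewrite big_split /= IH //.
have -> : \sum_(j < N) (a == j) = 1.
  rewrite (bigD1 (Ordinal Ha)) //= eqxx big1 // => j Hj.
  apply/eqP; rewrite eqb0; apply: contra Hj => /eqP E; apply/eqP/val_inj; by rewrite /= E.
by rewrite add1n.
Qed.

Theorem mainTheorem3 (Sigma A : finType) (S : ANS Sigma) (x : nat -> A) :
  addable S -> automatic S x ->
  weakly_codable S (winning_shift (orbit_closure x)).
Proof.
move=> Hadd0 Haut k i Hik.
have Hadd := Hadd_of Hadd0.
have HT1 := HT1_of Hadd.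
have Hlet := Hlet_of Haut HT1.
apply: (recog_rec (P := fun v => Top x i (ofv v))); last first.
  apply: Rec_to_rec; [exact: (Rec_Top HT1 Hadd Hlet)|exact: dep_Top].
move=> t; rewrite Top_sem.
set e := ofv (tnth t).
have Ht : mkseq e i = t.
  apply: (@eq_from_nth _ 0); first by rewrite size_mkseq size_tuple.
  move=> l; rewrite size_mkseq => Hl; rewrite nth_mkseq // /e ofv_lt.
  by rewrite (tnth_nth 0).
have Hcnt : (fun j => count (pred1 j) t) = cnt i e.
  apply: funext => j; rewrite -Ht /mkseq count_map; apply: eq_count => k0.
  by rewrite /= eq_sym.
have Hsort : sorted leq t <-> Sorted i e.
  rewrite -Ht; split.
    move=> H a b Hab Hb.
    have := sorted_leq_nth leq_trans leqnn 0 H; rewrite size_mkseq => /(_ a b).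
    rewrite !inE !nth_mkseq //; last by lia.
    by move=> /(_ ltac:(lia) Hb Hab).
  move=> H; rewrite sorted_pairwise; last exact: leq_trans.
  apply/(pairwiseP 0) => a b; rewrite !inE size_mkseq => Ha Hb Hab.
  by rewrite !nth_mkseq //; apply: H => //; apply: ltnW.
split.
  case=> y [Hw [[s [Hsum Hsk]] [Hs Hy]]].
  have Ey : y = (fun j => count (pred1 j) t) by apply: funext => j; rewrite Hy.
  split; first exact/Hsort.
  by rewrite -Hcnt -Ey; apply/win_good.
case=> Hs Hg; exists (fun j => count (pred1 j) t); split.
  by apply/win_good; rewrite Hcnt.
split; last by split => //; apply/Hsort.
exists i; split => //.
exists (sumn t).+1; split.
  move=> j Hj; apply/eqP; rewrite -leqn0 leqNgt -has_count; apply/hasPn => a Ha /=.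
  apply/eqP => E; subst a.
  have : j <= sumn t.
    elim: (val t) Ha => //= b s IH; rewrite inE => /orP[/eqP ->|/IH]; first exact: leq_addr.
    by move=> H; apply: leq_trans H (leq_addl _ _).
  lia.
rewrite sum_count_ord ?size_tuple //.
apply/allP => a Ha; rewrite ltnS.
elim: (val t) Ha => //= b s IH; rewrite inE => /orP[/eqP ->|/IH]; first exact: leq_addr.
by move=> H; apply: leq_trans H (leq_addl _ _).
Qed.
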